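(* Let $(A,[\cdot,\cdot])$ be a Malcev algebra, $\rho:A\to\mathrm{End}(V)$ a representation of $A$, $\widehat{A}=A\ltimes_{\rho^*}V^*$, and $T:V\to A$ a linear map. The following are equivalent: (i) $T$ is an $\mathcal{O}$-operator of $A$ associated to $\rho$; (ii) $T-\sigma(T)$ is a skew-symmetric solution of the Malcev Yang-Baxter equation in $\widehat{A}$; (iii) $T-\sigma(T)$, regarded as a linear map $\widehat{A}^*\to\widehat{A}$, is an $\mathcal{O}$-operator of the Malcev algebra $\widehat{A}$ associated to the representation $\mathrm{ad}^*$ of $\widehat{A}$ on $\widehat{A}^*$.
   Context: Field $\mathbb{K}$ of characteristic zero, finite-dimensional spaces. A Malcev algebra is a vector space with an anti-symmetric bracket satisfying $J(x,y,[x,z])=[J(x,y,z),x]$, $J(x,y,z)=[[x,y],z]+[[z,x],y]+[[y,z],x]$. A representation of $A$ on $V$ is a linear map $\rho:A\to\mathrm{End}(V)$ with $\rho([[x,y],z])=\rho(x)\rho(y)\rho(z)-\rho(z)\rho(x)\rho(y)+\rho(y)\rho([z,x])-\rho([y,z])\rho(x)$. Its dual $\rho^*$ is given by $\langle\rho^*(x)a^*,b\rangle=-\langle a^*,\rho(x)b\rangle$. $\widehat{A}=A\ltimes_{\rho^*}V^*$ is $A\oplus V^*$ with bracket $[x+a^*,y+b^*]=[x,y]+\rho^*(x)b^*-\rho^*(y)a^*$. The adjoint representation is $\mathrm{ad}(x)y=[x,y]$, and $\mathrm{ad}^*$ is its dual. An $\mathcal{O}$-operator associated to a representation $(W,\pi)$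 of a Malcev algebra $L$ is a linear map $S:W\to L$ with $[S(a),S(b)]=S(\pi(S(a))b-\pi(S(b))a)$. $T$ is identified with $\sum_i T(v_i)\otimes v_i^*\in\widehat{A}\otimes\widehat{A}$ ($\{v_i\}$ a basis of $V$, $\{v_i^*\}$ the dual basis), $\sigma(a\otimes b)=b\otimes a$, and an element $r\in\widehat{A}\otimes\widehat{A}$ is regarded as a map $\widehat{A}^*\to\widehat{A}$ via $\langle a^*,r(b^* )\rangle=\langle a^*\otimes b^*,r\rangle$. For $r=\sum_i x_i\otimes y_i$, $r$ solves the Malcev Yang-Baxter equation if $\sum_{i,j}[x_i,x_j]\otimes y_i\otimes y_j+\sum_{i,j}x_i\otimes[y_i,x_j]\otimes y_j+\sum_{i,j}x_i\otimes x_j\otimes[y_i,y_j]=0$. *)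

(* Defs.v *)
(* Finite-dimensional spaces are modelled in coordinates:
   A = K^n, V = K^m (row vectors), V^* = K^m with the standard pairing,
   so that the dual basis of the standard basis is the standard basis. *)
From HB Require Import structures.
From mathcomp Require Import all_boot all_order all_algebra.
Set Implicit Arguments. Unset Strict Implicit. Unset Printing Implicit Defensive.
Import Order.TTheory GRing.Theory Num.Theory.
Local Open Scope ring_scope.

Section Defs.
Variable K : fieldType.

Definition ev (p : nat) (i : 'I_p) : 'rV[K]_p := delta_mx 0 i.

Definition pair (p : nat) (f u : 'rV[K]_p) : K := \sum_(i < p) f 0 i * u 0 i.

Definition jacobiator (p : nat) (br : 'rV[K]_p -> 'rV[K]_p -> 'rV[K]_p)
  (x y z : 'rV[K]_p) : 'rV[K]_p :=
  br (br x y) z + br (br z x) y + br (br y z) x.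

Definition is_malcev (p : nat) (br : 'rV[K]_p -> 'rV[K]_p -> 'rV[K]_p) : Prop :=
  [/\ (forall x, linear (br x)), (forall y, linear (br^~ y)),
      (forall x y, br x y = - br y x) &
      (forall x y z, jacobiator br x y (br x z) = br (jacobiator br x y z) x)].

Definition is_malcev_rep (p q : nat) (br : 'rV[K]_p -> 'rV[K]_p -> 'rV[K]_p)
  (rho : 'rV[K]_p -> 'rV[K]_q -> 'rV[K]_q) : Prop :=
  [/\ (forall x, linear (rho x)),
      (forall (a : K) x y v, rho (a *: x + y) v = a *: rho x v + rho y v) &
      (forall x y z v,
        rho (br (br x y) z) v =
          rho x (rho y (rho z v)) - rho z (rho x (rho y v))
          + rho y (rho (br z x) v) - rho (br y z) (rho x v))].

(* dual representation: <rho^*(x) f, b> = - <f, rho(x) b>  (pairing with standard basis) *)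
Definition dualrep (p q : nat) (rho : 'rV[K]_p -> 'rV[K]_q -> 'rV[K]_q)
  (x : 'rV[K]_p) (f : 'rV[K]_q) : 'rV[K]_q :=
  \row_(i < q) - pair f (rho x (ev i)).

Definition adj (p : nat) (br : 'rV[K]_p -> 'rV[K]_p -> 'rV[K]_p) := br.

Definition O_operator (p q : nat) (brL : 'rV[K]_p -> 'rV[K]_p -> 'rV[K]_p)
  (pi : 'rV[K]_p -> 'rV[K]_q -> 'rV[K]_q) (S : 'rV[K]_q -> 'rV[K]_p) : Prop :=
  forall a b, brL (S a) (S b) = S (pi (S a) b - pi (S b) a).

(* semidirect product A ⋉_{rho^*} V^*, with x + a^* encoded as row_mx x a^* *)
Definition inA (n m : nat) (x : 'rV[K]_n) : 'rV[K]_(n + m) := row_mx x 0.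
Definition inVs (n m : nat) (a : 'rV[K]_m) : 'rV[K]_(n + m) := row_mx 0 a.

Definition hatbr (n m : nat) (br : 'rV[K]_n -> 'rV[K]_n -> 'rV[K]_n)
  (rho : 'rV[K]_n -> 'rV[K]_m -> 'rV[K]_m) (u w : 'rV[K]_(n + m)) : 'rV[K]_(n + m) :=
  row_mx (br (lsubmx u) (lsubmx w))
         (dualrep rho (lsubmx u) (rsubmx w) - dualrep rho (lsubmx w) (rsubmx u)).

(* tensors: x ⊗ y in K^N ⊗ K^N is the matrix with entries x_i y_j *)
Definition tensor2 (N : nat) (x y : 'rV[K]_N) : 'M[K]_N := trmx x *m y.

Definition sigma (N : nat) (r : 'M[K]_N) : 'M[K]_N := trmx r.

(* T identified with sum_i T(v_i) ⊗ v_i^* in Â ⊗ Â *)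
Definition op_tensor (n m : nat) (T : 'rV[K]_m -> 'rV[K]_n) : 'M[K]_(n + m) :=
  \sum_(i < m) tensor2 (inA m (T (ev i))) (inVs n (ev i)).

(* r regarded as a map from the dual of A-hat to A-hat, via <f, r(g)> = <f (x) g, r> *)
Definition tensor_map (N : nat) (r : 'M[K]_N) (b : 'rV[K]_N) : 'rV[K]_N :=
  b *m trmx r.

Definition skew_symmetric (N : nat) (r : 'M[K]_N) : Prop := sigma r = - r.

(* Malcev Yang-Baxter equation, for r written as r = sum_a x_a ⊗ y_a with
   x_a = e_a and y_a = (row a of r); a 3-tensor is zero iff all its
   coordinates (i, j, k) vanish. *)
Definition MYBE (N : nat) (br : 'rV[K]_N -> 'rV[K]_N -> 'rV[K]_N) (r : 'M[K]_N)
  : Prop :=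
  forall i j k : 'I_N,
    \sum_(a < N) \sum_(b < N)
      (  (br (ev a) (ev b)) 0 i * (row a r) 0 j * (row b r) 0 k
       + (ev a) 0 i * (br (row a r) (ev b)) 0 j * (row b r) 0 k
       + (ev a) 0 i * (ev b) 0 j * (br (row a r) (row b r)) 0 k) = 0.

End Defs.

(* Main.v *)
Require Import Defs.
From HB Require Import structures.
From mathcomp Require Import all_boot all_order all_algebra ring.
Import Order.TTheory GRing.Theory Num.Theory.
Set Implicit Arguments. Unset Strict Implicit. Unset Printing Implicit Defensive.
Local Open Scope ring_scope.

Lemma pairDl (K : fieldType) p (f g u : 'rV[K]_p) : pair (f + g) u = pair f u + pair g u.
Proof. by rewrite /pair -big_split; apply: eq_bigr => i _; rewrite mxE mulrDl. Qed.
Lemma pairDr (K : fieldType) p (f g u : 'rV[K]_p) : pair u (f + g) = pair u f + pair u g.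
Proof. by rewrite /pair -big_split; apply: eq_bigr => i _; rewrite mxE mulrDr. Qed.
Lemma pairZl (K : fieldType) p a (f u : 'rV[K]_p) : pair (a *: f) u = a * pair f u.
Proof. by rewrite /pair mulr_sumr; apply: eq_bigr => i _; rewrite mxE mulrA. Qed.
Lemma pairZr (K : fieldType) p a (f u : 'rV[K]_p) : pair u (a *: f) = a * pair u f.
Proof. by rewrite /pair mulr_sumr; apply: eq_bigr => i _; rewrite mxE mulrCA. Qed.
Lemma pairNl (K : fieldType) p (f u : 'rV[K]_p) : pair (- f) u = - pair f u.
Proof. by rewrite -scaleN1r pairZl mulN1r. Qed.
Lemma pairNr (K : fieldType) p (f u : 'rV[K]_p) : pair u (- f) = - pair u f.
Proof. by rewrite -scaleN1r pairZr mulN1r. Qed.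
Lemma pairBl (K : fieldType) p (f g u : 'rV[K]_p) : pair (f - g) u = pair f u - pair g u.
Proof. by rewrite pairDl pairNl. Qed.
Lemma pairBr (K : fieldType) p (f g u : 'rV[K]_p) : pair u (f - g) = pair u f - pair u g.
Proof. by rewrite pairDr pairNr. Qed.
Lemma pair0l (K : fieldType) p (u : 'rV[K]_p) : pair 0 u = 0.
Proof. by rewrite -(scale0r (0 : 'rV[K]_p)) pairZl mul0r. Qed.
Lemma pair0r (K : fieldType) p (u : 'rV[K]_p) : pair u 0 = 0.
Proof. by rewrite -(scale0r (0 : 'rV[K]_p)) pairZr mul0r. Qed.
Lemma pairC (K : fieldType) p (f u : 'rV[K]_p) : pair f u = pair u f.
Proof. by apply: eq_bigr => i _; rewrite mulrC. Qed.
Lemma evE (K : fieldType) p (j l : 'I_p) : (ev K j) 0 l = (l == j)%:R.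
Proof. by rewrite /ev mxE eqxx. Qed.
Lemma pair_evl (K : fieldType) p (j : 'I_p) u : pair (ev K j) u = u 0 j.
Proof.
rewrite /pair (bigD1 j) //= big1 ?addr0; first by rewrite evE eqxx mul1r.
by move=> i /negPf; rewrite evE => ->; rewrite mul0r.
Qed.
Lemma pair_evr (K : fieldType) p (j : 'I_p) u : pair u (ev K j) = u 0 j.
Proof. by rewrite pairC pair_evl. Qed.
Lemma pair_row_mx (K : fieldType) p q (x y : 'rV[K]_p) (a b : 'rV[K]_q) :
  pair (row_mx x a) (row_mx y b) = pair x y + pair a b.
Proof. by rewrite /pair big_split_ord /=; congr (_ + _); apply: eq_bigr => i _;
  rewrite ?row_mxEl ?row_mxEr. Qed.

Lemma lin0 (K : fieldType) (U V : lmodType K) (f : U -> V) : linear f -> f 0 = 0.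
Proof.
move=> lf; have := lf 1 0 0; rewrite !scale1r addr0 => H.
by apply: (addrI (f 0)); rewrite addr0 -H.
Qed.
Lemma linD (K : fieldType) (U V : lmodType K) (f : U -> V) : linear f -> forall u v, f (u + v) = f u + f v.
Proof. by move=> lf u v; have := lf 1 u v; rewrite !scale1r. Qed.
Lemma linZ (K : fieldType) (U V : lmodType K) (f : U -> V) : linear f -> forall a u, f (a *: u) = a *: f u.
Proof. by move=> lf a u; rewrite -[a *: u]addr0 lf lin0 // addr0. Qed.
Lemma linN (K : fieldType) (U V : lmodType K) (f : U -> V) : linear f -> forall u, f (- u) = - f u.
Proof. by move=> lf u; rewrite -scaleN1r linZ // scaleN1r. Qed.
Lemma linB (K : fieldType) (U V : lmodType K) (f : U -> V) : linear f -> forall u v, f (u - v) = f u - f v.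
Proof. by move=> lf u v; rewrite linD // linN. Qed.
Lemma lin_sum (K : fieldType) (U V : lmodType K) (f : U -> V) N (c : 'I_N -> K) (v : 'I_N -> U) :
  linear f -> f (\sum_i c i *: v i) = \sum_i c i *: f (v i).
Proof.
move=> lf; rewrite (big_morph f (linD lf) (lin0 lf)).
by apply: eq_bigr => i _; rewrite linZ.
Qed.
Lemma pair_suml (K : fieldType) p N (c : 'I_N -> K) (v : 'I_N -> 'rV[K]_p) u :
  pair (\sum_i c i *: v i) u = \sum_i c i * pair (v i) u.
Proof.
rewrite (big_morph (fun f => pair f u) (fun f g => pairDl f g u) (pair0l u)).
by apply: eq_bigr => i _; rewrite pairZl.
Qed.
Lemma ext_basis (K : fieldType) N (l : 'rV[K]_N -> K) :
  (forall a u v, l (a *: u + v) = a * l u + l v) -> (forall i, l (ev K i) = 0) ->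
  forall u, l u = 0.
Proof.
move=> ll l0 u.
have l00 : l 0 = 0 by have := ll 1 0 0; rewrite scale1r addr0 mul1r => H; apply: (addrI (l 0)); rewrite addr0 -H.
rewrite (row_sum_delta u).
have lD : forall x y, l (x + y) = l x + l y by move=> x y; have := ll 1 x y; rewrite scale1r mul1r.
rewrite (big_morph l lD l00).
apply: big1 => i _; rewrite -[_ *: _]addr0 ll l00 addr0.
by have := l0 i; rewrite /ev => ->; rewrite mulr0.
Qed.


Definition Cyc (K : fieldType) N (B : 'rV[K]_N -> 'rV[K]_N -> 'rV[K]_N)
  (R : 'rV[K]_N -> 'rV[K]_N) f g h :=
  pair f (B (R g) (R h)) + pair g (B (R h) (R f)) + pair h (B (R f) (R g)).

Lemma sum_delta (K : fieldType) N (i : 'I_N) (F : 'I_N -> K) :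
  \sum_a (ev K a) 0 i * F a = F i.
Proof.
rewrite (bigD1 i) //= big1 ?addr0; first by rewrite evE eqxx mul1r.
by move=> a /negPf; rewrite evE eq_sym => ->; rewrite mul0r.
Qed.

Lemma sum_delta2 (K : fieldType) N (i : 'I_N) (Y Z : 'I_N -> 'I_N -> K) :
  \sum_a \sum_b (ev K a) 0 i * Y a b * Z a b = \sum_b Y i b * Z i b.
Proof.
rewrite -(sum_delta i (fun a => \sum_b Y a b * Z a b)).
by apply: eq_bigr => a _; rewrite mulr_sumr; apply: eq_bigr => b _; rewrite mulrA.
Qed.

Lemma sum_delta3 (K : fieldType) N (i j : 'I_N) (W : 'I_N -> 'I_N -> K) :
  \sum_a \sum_b (ev K a) 0 i * (ev K b) 0 j * W a b = W i j.
Proof.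
rewrite -(sum_delta i (fun a => W a j)); apply: eq_bigr => a _.
rewrite -(sum_delta j (fun b => W a b)) mulr_sumr; apply: eq_bigr => b _; rewrite mulrA.
by [].
Qed.

Lemma pair_mulmx (K : fieldType) N (h phi : 'rV[K]_N) (M : 'M[K]_N) :
  pair h (phi *m M) = pair phi (h *m M^T).
Proof.
rewrite /pair; under eq_bigr do rewrite mxE mulr_sumr.
under [RHS]eq_bigr do rewrite mxE mulr_sumr.
rewrite exchange_big; apply: eq_bigr => k _; apply: eq_bigr => l _.
by rewrite mxE; ring.
Qed.

Lemma R_skew (K : fieldType) N (r : 'M[K]_N) h phi : r^T = - r ->
  pair h (tensor_map r phi) = - pair phi (tensor_map r h).
Proof.
move=> sk; rewrite /tensor_map pair_mulmx trmxK sk mulmxN pairNr opprK.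
by [].
Qed.

Lemma pair_dualrep (K : fieldType) N p (B : 'rV[K]_N -> 'rV[K]_p -> 'rV[K]_p) u g w :
  linear (B u) -> pair (dualrep B u g) w = - pair g (B u w).
Proof.
move=> lB; rewrite {2}(row_sum_delta w) lin_sum // [pair g _]pairC pair_suml -sumrN.
rewrite {1}/pair; apply: eq_bigr => i _; rewrite mxE pairC mulNr mulrC.
by [].
Qed.


Lemma O_diff (K : fieldType) N (B : 'rV[K]_N -> 'rV[K]_N -> 'rV[K]_N) (r : 'M[K]_N) f g h :
  r^T = - r -> (forall u, linear (B u)) -> (forall x y, B x y = - B y x) ->
  pair h (B (tensor_map r f) (tensor_map r g))
  - pair h (tensor_map r (dualrep (adj B) (tensor_map r f) g - dualrep (adj B) (tensor_map r g) f))
  = Cyc B (tensor_map r) f g h.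
Proof.
move=> sk lB aB; rewrite R_skew // pairBl !pair_dualrep // /Cyc.
rewrite /adj (aB (tensor_map r f) (tensor_map r h)) pairNr; ring.
Qed.

Lemma row_R (K : fieldType) N (r : 'M[K]_N) j :
  tensor_map r (ev K j) = \row_a r a j.
Proof.
apply/rowP => a; rewrite !mxE.
under eq_bigr do rewrite mxE.
rewrite (bigD1 j) //= !eqxx /= mul1r big1 ?addr0 ?mxE // => l /negPf ->.
by rewrite mul0r.
Qed.

Lemma R_ev_sum (K : fieldType) N (r : 'M[K]_N) j :
  tensor_map r (ev K j) = \sum_a r a j *: ev K a.
Proof.
rewrite row_R {1}(row_sum_delta (\row_a r a j)); apply: eq_bigr => a _.
by rewrite mxE.
Qed.

Lemma row_skew (K : fieldType) N (r : 'M[K]_N) a : r^T = - r ->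
  row a r = - tensor_map r (ev K a).
Proof.
move=> sk; rewrite row_R; apply/rowP => l; rewrite !mxE.
have := congr1 (fun M : 'M[K]_N => M l a) sk; rewrite !mxE => ->.
by [].
Qed.

Lemma lin_sum2 (K : fieldType) p q N (B : 'rV[K]_p -> 'rV[K]_p -> 'rV[K]_q) y (c : 'I_N -> K) v :
  linear (B^~ y) -> B (\sum_i c i *: v i) y = \sum_i c i *: B (v i) y.
Proof. by move=> l; exact: (lin_sum (f := B^~ y)). Qed.

Lemma mybe_cyc (K : fieldType) N (B : 'rV[K]_N -> 'rV[K]_N -> 'rV[K]_N) (r : 'M[K]_N) i j k :
  r^T = - r -> (forall u, linear (B u)) -> (forall v, linear (B^~ v)) ->
  (forall x y, B x y = - B y x) ->
  \sum_(a < N) \sum_(b < N)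
      (  (B (ev K a) (ev K b)) 0 i * (row a r) 0 j * (row b r) 0 k
       + (ev K a) 0 i * (B (row a r) (ev K b)) 0 j * (row b r) 0 k
       + (ev K a) 0 i * (ev K b) 0 j * (B (row a r) (row b r)) 0 k)
  = Cyc B (tensor_map r) (ev K i) (ev K j) (ev K k).
Proof.
move=> sk lB lB' aB.
under eq_bigr do rewrite !big_split /=.
rewrite !big_split /= sum_delta2 sum_delta3 /Cyc !pair_evl.
rewrite !(row_skew _ sk) !(linN (lB _)) !(linN (lB' _)) opprK.
congr (_ + _ + _).
- rewrite [in RHS](R_ev_sum r j) lin_sum2 // summxE; apply: eq_bigr => a _.
  rewrite (R_ev_sum r k) lin_sum // [RHS]mxE summxE mulr_sumr; apply: eq_bigr => b _.
  rewrite !mxE; ring.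
- rewrite aB mxE (R_ev_sum r k) lin_sum // summxE -sumrN; apply: eq_bigr => b _.
  rewrite (linN (lB' _)) !mxE; ring.
Qed.


Lemma R_lin (K : fieldType) N (r : 'M[K]_N) c f f' :
  tensor_map r (c *: f + f') = c *: tensor_map r f + tensor_map r f'.
Proof. by rewrite /tensor_map mulmxDl scalemxAl. Qed.

Lemma CycL (K : fieldType) N (B : 'rV[K]_N -> 'rV[K]_N -> 'rV[K]_N) (r : 'M[K]_N) c f f' g h :
  (forall u, linear (B u)) -> (forall c x y v, B (c *: x + y) v = c *: B x v + B y v) ->
  Cyc B (tensor_map r) (c *: f + f') g h
  = c * Cyc B (tensor_map r) f g h + Cyc B (tensor_map r) f' g h.
Proof.
move=> lB lB1; rewrite /Cyc !R_lin lB lB1 !pairDl !pairZl !pairDr !pairZr; ring.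
Qed.

Lemma CycC (K : fieldType) N (B : 'rV[K]_N -> 'rV[K]_N -> 'rV[K]_N) (R : 'rV[K]_N -> 'rV[K]_N) f g h :
  Cyc B R f g h = Cyc B R g h f.
Proof. rewrite /Cyc; ring. Qed.

Lemma Cyc_all (K : fieldType) N (B : 'rV[K]_N -> 'rV[K]_N -> 'rV[K]_N) (r : 'M[K]_N) :
  (forall u, linear (B u)) -> (forall c x y v, B (c *: x + y) v = c *: B x v + B y v) ->
  (forall i j k, Cyc B (tensor_map r) (ev K i) (ev K j) (ev K k) = 0) ->
  forall f g h, Cyc B (tensor_map r) f g h = 0.
Proof.
move=> lB lB1 H0.
have H1 : forall f j k, Cyc B (tensor_map r) f (ev K j) (ev K k) = 0.
  move=> f j k; apply: (ext_basis (l := fun f => Cyc B (tensor_map r) f (ev K j) (ev K k))).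
    by move=> a u v; rewrite CycL.
  by move=> i; apply: H0.
have H2 : forall f g k, Cyc B (tensor_map r) f g (ev K k) = 0.
  move=> f g k; rewrite -CycC -CycC.
  apply: (ext_basis (l := fun g => Cyc B (tensor_map r) g (ev K k) f)).
    by move=> a u v; rewrite CycL.
  by move=> i; rewrite CycC CycC; apply: H1.
move=> f g h; rewrite -CycC.
apply: (ext_basis (l := fun h => Cyc B (tensor_map r) h f g)).
  by move=> a u v; rewrite CycL.
by move=> i; rewrite CycC; apply: H2.
Qed.


Definition Tt (K : fieldType) n m (T : 'rV[K]_m -> 'rV[K]_n) (x : 'rV[K]_n) : 'rV[K]_m :=
  \sum_i pair x (T (ev K i)) *: ev K i.

Lemma pair_Tt (K : fieldType) n m (T : 'rV[K]_m -> 'rV[K]_n) y w :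
  linear T -> pair (Tt T y) w = pair y (T w).
Proof.
move=> lT; rewrite /Tt pair_suml {2}(row_sum_delta w) lin_sum // pairC pair_suml.
by apply: eq_bigr => i _; rewrite pair_evl pairC mulrC.
Qed.

Lemma mul_tensorT (K : fieldType) N (b u w : 'rV[K]_N) :
  b *m (tensor2 u w)^T = pair b w *: u.
Proof.
rewrite /tensor2 trmx_mul trmxK mulmxA [b *m _]mx11_scalar mul_scalar_mx.
congr (_ *: _); rewrite mxE /pair; apply: eq_bigr => i _; rewrite mxE.
by [].
Qed.

Lemma mul_tensor (K : fieldType) N (b u w : 'rV[K]_N) :
  b *m tensor2 u w = pair b u *: w.
Proof.
rewrite /tensor2 mulmxA [b *m _]mx11_scalar mul_scalar_mx.
congr (_ *: _); rewrite mxE /pair; apply: eq_bigr => i _; rewrite mxE.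
by [].
Qed.

Lemma inA_lin (K : fieldType) n m : linear (@inA K n m).
Proof. by move=> c u v; rewrite /inA scale_row_mx add_row_mx scaler0 addr0. Qed.
Lemma inVs_lin (K : fieldType) n m : linear (@inVs K n m).
Proof. by move=> c u v; rewrite /inVs scale_row_mx add_row_mx scaler0 addr0. Qed.

Lemma RE (K : fieldType) n m (T : 'rV[K]_m -> 'rV[K]_n) x a :
  linear T ->
  tensor_map (op_tensor T - sigma (op_tensor T)) (row_mx x a) = row_mx (T a) (- Tt T x).
Proof.
move=> lT; rewrite /tensor_map /sigma linearB /= trmxK mulmxBr.
rewrite /op_tensor linear_sum /= !mulmx_sumr.
under eq_bigr do rewrite mul_tensorT /inVs pair_row_mx pair0r add0r pair_evr.
under [X in _ - X]eq_bigr do rewrite mul_tensor /inA pair_row_mx pair0r addr0.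
rewrite -(lin_sum _ _ (@inA_lin K n m)) -(lin_sum _ _ (@inVs_lin K n m)) -lin_sum //.
by rewrite -row_sum_delta /inA /inVs opp_row_mx add_row_mx oppr0 addr0 add0r.
Qed.


Lemma dualrep_linf (K : fieldType) n m (rho : 'rV[K]_n -> 'rV[K]_m -> 'rV[K]_m) X c f g :
  dualrep rho X (c *: f + g) = c *: dualrep rho X f + dualrep rho X g.
Proof. by apply/rowP => i; rewrite !mxE pairDl pairZl; ring. Qed.

Lemma dualrep_linx (K : fieldType) n m (rho : 'rV[K]_n -> 'rV[K]_m -> 'rV[K]_m) X Y c f :
  (forall (a : K) x y v, rho (a *: x + y) v = a *: rho x v + rho y v) ->
  dualrep rho (c *: X + Y) f = c *: dualrep rho X f + dualrep rho Y f.
Proof. by move=> H; apply/rowP => i; rewrite !mxE H pairDr pairZr; ring. Qed.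

Lemma hatbr_anti (K : fieldType) n m (br : 'rV[K]_n -> 'rV[K]_n -> 'rV[K]_n)
  (rho : 'rV[K]_n -> 'rV[K]_m -> 'rV[K]_m) :
  (forall x y, br x y = - br y x) -> forall u w, hatbr br rho u w = - hatbr br rho w u.
Proof. by move=> ab u w; rewrite /hatbr opp_row_mx opprB -ab. Qed.

Lemma hatbr_lin (K : fieldType) n m (br : 'rV[K]_n -> 'rV[K]_n -> 'rV[K]_n)
  (rho : 'rV[K]_n -> 'rV[K]_m -> 'rV[K]_m) :
  (forall x, linear (br x)) ->
  (forall (a : K) x y v, rho (a *: x + y) v = a *: rho x v + rho y v) ->
  forall u, linear (hatbr br rho u).
Proof.
move=> lb H u c w w'; rewrite /hatbr !linearP /= lb dualrep_linf dualrep_linx //.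
rewrite scale_row_mx add_row_mx; congr row_mx.
by rewrite scalerBr opprD addrACA.
Qed.

Definition Dd (K : fieldType) n m (br : 'rV[K]_n -> 'rV[K]_n -> 'rV[K]_n)
  (rho : 'rV[K]_n -> 'rV[K]_m -> 'rV[K]_m) (T : 'rV[K]_m -> 'rV[K]_n) a b :=
  br (T a) (T b) - T (rho (T a) b - rho (T b) a).

Lemma pair_dualrep' (K : fieldType) N p (B : 'rV[K]_N -> 'rV[K]_p -> 'rV[K]_p) u g w :
  linear (B u) -> pair w (dualrep B u g) = - pair g (B u w).
Proof. by move=> l; rewrite pairC pair_dualrep. Qed.

Lemma CycE (K : fieldType) n m (br : 'rV[K]_n -> 'rV[K]_n -> 'rV[K]_n)
  (rho : 'rV[K]_n -> 'rV[K]_m -> 'rV[K]_m) (T : 'rV[K]_m -> 'rV[K]_n) x a y b z c :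
  linear T -> (forall X, linear (rho X)) ->
  Cyc (hatbr br rho) (tensor_map (op_tensor T - sigma (op_tensor T)))
     (row_mx x a) (row_mx y b) (row_mx z c)
  = pair z (Dd br rho T a b) + pair x (Dd br rho T b c) + pair y (Dd br rho T c a).
Proof.
move=> lT lr; rewrite /Cyc !RE // /hatbr !row_mxKl !row_mxKr !pair_row_mx.
rewrite !pairBr !pair_dualrep' // !pairNl !pair_Tt // ?/Dd ?pairBr !(linB lT) !pairBr.
ring.
Qed.


Unset Implicit Arguments. Set Strict Implicit.

Theorem corollary2p11 (K : fieldType) (n m : nat)
  (charK : [pchar K] =i pred0)
  (br : 'rV[K]_n -> 'rV[K]_n -> 'rV[K]_n)
  (rho : 'rV[K]_n -> 'rV[K]_m -> 'rV[K]_m)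
  (T : 'rV[K]_m -> 'rV[K]_n) :
  is_malcev br -> is_malcev_rep br rho -> linear T ->
  let r := op_tensor T - sigma (op_tensor T) in
  [<-> O_operator br rho T;
       skew_symmetric r /\ MYBE (hatbr br rho) r;
       O_operator (hatbr br rho) (dualrep (adj (hatbr br rho))) (tensor_map r)].
Proof.
case=> lbr lbr' abr _ [lrho rhoX _] lT r.
have sk : r^T = - r by rewrite /r /sigma linearB /= trmxK opprB.
have lB := hatbr_lin lbr rhoX.
have aB := hatbr_anti rho abr.
have lB' : forall v, linear ((hatbr br rho)^~ v).
  by move=> v c x y /=; rewrite aB (lB v) opprD -scalerN -!aB.
have lB1 : forall c x y v, hatbr br rho (c *: x + y) v = c *: hatbr br rho x v + hatbr br rho y v.
  by move=> c x y v; exact: (lB' v c x y).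
have CycE' : forall f g h, Cyc (hatbr br rho) (tensor_map r) f g h =
   pair (lsubmx h) (Dd br rho T (rsubmx f) (rsubmx g))
   + pair (lsubmx f) (Dd br rho T (rsubmx g) (rsubmx h))
   + pair (lsubmx g) (Dd br rho T (rsubmx h) (rsubmx f)).
  by move=> f g h; rewrite -{1}(hsubmxK f) -{1}(hsubmxK g) -{1}(hsubmxK h) CycE.
tfae.
- move=> HO; split; first by rewrite /skew_symmetric /sigma sk.
  move=> i j k; rewrite mybe_cyc // CycE'.
  have D0 : forall a b, Dd br rho T a b = 0 by move=> a b; rewrite /Dd HO subrr.
  by rewrite !D0 !pair0r !addr0.
- case=> _ my f g; apply/rowP => k; apply/eqP; rewrite -subr_eq0.
  have all0 := Cyc_all lB lB1 (fun i j k => etrans (esym (mybe_cyc i j k sk lB lB' aB)) (my i j k)).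
  by rewrite -!pair_evl (O_diff (B := hatbr br rho)) // all0.
- move=> HO a b.
  have all0 : forall f g h, Cyc (hatbr br rho) (tensor_map r) f g h = 0.
    by move=> f g h; rewrite -(O_diff (B := hatbr br rho)) // HO subrr.
  apply/rowP => k; apply/eqP; rewrite -subr_eq0.
  have := all0 (row_mx 0 a) (row_mx 0 b) (row_mx (ev K k) 0).
  by rewrite CycE // !pair0l !addr0 pair_evl /Dd !mxE => ->.
Qed.
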